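(* Let $p$ be an odd prime, let $m,k$ be integers with $0<k\le\lfloor m/2\rfloor$ and $m/\gcd(m,k)$ odd, and put $l=\gcd(m,k)$. Let $\alpha\in\mathbb{F}_{p^l}$ be a non-square in $\mathbb{F}_{p^m}$, and let $\sigma(x)=x^{p^s}$ with $0\le s\le\lfloor m/2\rfloor$. With $x\circ_k y=x^{p^k}y+y^{p^k}x$, define on $\mathbb{F}_{p^m}^2$ the multiplication $(a,b)*(c,d)=(a\circ_k c+\alpha\,\sigma(b\circ_k d),\ ad+bc)$, let $L(a,b)=(a+a^{p^k},b)$, and let $\mathbb{S}_{k,\sigma}=(\mathbb{F}_{p^m}^2,+,\star)$ be the semifield with $L(x)\star L(y)=x*y$. Then the nucleus $N(\mathbb{S}_{k,\sigma})$ (which equals its left and its right nucleus) is isomorphic to $\mathbb{F}_{p^t}$, where $t=\gcd(m,k,s)$ (with $\gcd(m,k,0)=\gcd(m,k)$).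
   Context: For a semifield $(\mathbb{S},+,\star)$: left nucleus $N_l=\{a:(a\star x)\star y=a\star(x\star y)\ \forall x,y\}$, middle nucleus $N_m=\{a:(x\star a)\star y=x\star(a\star y)\ \forall x,y\}$, right nucleus $N_r=\{a:(x\star y)\star a=x\star(y\star a)\ \forall x,y\}$, and nucleus $N=N_l\cap N_m\cap N_r$. These are finite fields; for commutative $\mathbb{S}$, $N_l=N_r=N$. *)

(* Defs.v *)
From mathcomp Require Import all_boot all_order all_algebra all_field.
Set Implicit Arguments. Unset Strict Implicit. Unset Printing Implicit Defensive.
Import GRing.Theory.
Local Open Scope ring_scope.

Definition circ (F : fieldType) (p k : nat) (x y : F) : F :=
  x ^+ (p ^ k) * y + y ^+ (p ^ k) * x.

Definition padd (F : fieldType) (u v : F * F) : F * F := (u.1 + v.1, u.2 + v.2).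

Definition smul (F : fieldType) (p k : nat) (alpha : F) (s : nat) (u v : F * F)
  : F * F :=
  (circ p k u.1 v.1 + alpha * (circ p k u.2 v.2) ^+ (p ^ s),
   u.1 * v.2 + u.2 * v.1).

Definition Lmap (F : fieldType) (p k : nat) (u : F * F) : F * F :=
  (u.1 + u.1 ^+ (p ^ k), u.2).

(* the inverse of L (L is a bijection under the hypotheses of the theorem) *)
Definition Linv (F : finFieldType) (p k : nat) (u : F * F) : F * F :=
  odflt (0, 0) [pick x : F * F | Lmap p k x == u].

Definition sstar (F : finFieldType) (p k : nat) (alpha : F) (s : nat)
  (u v : F * F) : F * F :=
  smul p k alpha s (Linv p k u) (Linv p k v).

Definition left_nucleus (T : finType) (op : T -> T -> T) : {set T} :=
  [set a | [forall x, forall y, op (op a x) y == op a (op x y)]].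
Definition middle_nucleus (T : finType) (op : T -> T -> T) : {set T} :=
  [set a | [forall x, forall y, op (op x a) y == op x (op a y)]].
Definition right_nucleus (T : finType) (op : T -> T -> T) : {set T} :=
  [set a | [forall x, forall y, op (op x y) a == op x (op y a)]].
Definition nucleus (T : finType) (op : T -> T -> T) : {set T} :=
  left_nucleus op :&: middle_nucleus op :&: right_nucleus op.

(* the subfield F_{p^t} of F (when t | m, |F| = p^m) *)
Definition Fsub (F : finFieldType) (p t : nat) : {set F} :=
  [set x : F | x ^+ (p ^ t) == x].
Arguments Fsub : clear implicits.

(* Main.v *)
Require Import Defs.
From mathcomp Require Import all_boot all_order all_algebra all_field.
From mathcomp Require Import ring.
Import GRing.Theory.
Local Open Scope ring_scope.


Lemma pow0 {F : fieldType} (p n : nat) : (0 < p)%N -> (0 : F) ^+ (p ^ n) = 0.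
Proof. by move=> hp; rewrite expr0n expn_eq0 eqn0Ngt hp. Qed.

Lemma frobD {F : fieldType} (p n : nat) (x y : F) : p \in [pchar F] ->
  (x + y) ^+ (p ^ n) = x ^+ (p ^ n) + y ^+ (p ^ n).
Proof.
move=> hc; have pp := pcharf_prime hc.
elim: n => [|n IH]; first by rewrite !expn0 !expr1.
rewrite expnSr !exprM IH exprDn_pchar //.
by rewrite pnatE // .
Qed.

Lemma frobN {F : fieldType} (p n : nat) (x : F) : p \in [pchar F] ->
  (- x) ^+ (p ^ n) = - x ^+ (p ^ n).
Proof.
move=> hc; have pp := pcharf_prime hc.
have := @frobD F p n x (- x) hc; rewrite subrr pow0 ?prime_gt0 //.
by move/esym/eqP; rewrite addr_eq0 => /eqP ->; rewrite opprK.
Qed.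

Lemma frobB {F : fieldType} (p n : nat) (x y : F) : p \in [pchar F] ->
  (x - y) ^+ (p ^ n) = x ^+ (p ^ n) - y ^+ (p ^ n).
Proof. by move=> hc; rewrite frobD // frobN. Qed.

Lemma frob_inj {F : fieldType} (p n : nat) (x y : F) : p \in [pchar F] ->
  x ^+ (p ^ n) = y ^+ (p ^ n) -> x = y.
Proof.
move=> hc h; apply/eqP; rewrite -subr_eq0.
have : (x - y) ^+ (p ^ n) = 0 by rewrite frobB // h subrr.
by move/eqP; rewrite expf_eq0 => /andP[_ ->].
Qed.

Definition fixp {F : fieldType} (p : nat) (x : F) (n : nat) := x ^+ (p ^ n) = x.

Lemma fix_add {F : fieldType} p (x : F) a b : fixp p x a -> fixp p x b -> fixp p x (a + b).
Proof. by rewrite /fixp expnD exprM => -> ->. Qed.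

Lemma fix_mul {F : fieldType} p (x : F) d q : fixp p x d -> fixp p x (q * d).
Proof.
move=> hd; elim: q => [|q IH]; first by rewrite mul0n /fixp expn0 expr1.
by rewrite mulSn; apply: fix_add.
Qed.

Lemma fix_mod {F : fieldType} p (x : F) n d : fixp p x n -> fixp p x d -> fixp p x (n %% d).
Proof.
move=> hn hd; move: hn; rewrite /fixp {1}(divn_eq n d) expnD exprM.
by rewrite (@fix_mul F p x d (n %/ d) hd).
Qed.

Lemma fix_gcd {F : fieldType} {p} {x : F} {a b} : fixp p x a -> fixp p x b -> fixp p x (gcdn a b).
Proof.
elim: a {-2}a (leqnn a) b => [|N IH] a ha b hxa hxb.
  by move: ha; rewrite leqn0 => /eqP ->; rewrite gcd0n.
rewrite gcdnE; case: eqP => [_|/eqP a0]; first by [].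
apply: IH; last by [].
  by rewrite -ltnS (leq_trans _ ha) // ltn_mod lt0n.
by apply: fix_mod.
Qed.

Lemma fix_dvd {F : fieldType} {p} {x : F} {d n} : (d %| n)%N -> fixp p x d -> fixp p x n.
Proof. by move=> /divnK <-; apply: fix_mul. Qed.

Lemma gcd2k (m k : nat) : (0 < k)%N -> odd (m %/ gcdn m k) -> gcdn (k + k) m = gcdn m k.
Proof.
move=> k0 hodd.
have l0 : (0 < gcdn m k)%N by rewrite gcdn_gt0 k0 orbT.
have [m' hm] : exists m', m = (m' * gcdn m k)%N by exists (m %/ gcdn m k)%N; rewrite divnK // dvdn_gcdl.
have [k' hk] : exists k', k = (k' * gcdn m k)%N by exists (k %/ gcdn m k)%N; rewrite divnK // dvdn_gcdr.
move: hodd; rewrite {1}hm mulnK // => hodd.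
set l := gcdn m k in hm hk l0 *.
have hl : gcdn (m' * l) (k' * l) = l by rewrite -hm -hk.
have h1 : gcdn m' k' = 1%N.
  by apply/eqP; rewrite -(eqn_pmul2r l0) mul1n muln_gcdl hl.
rewrite hk hm -mulnDl -muln_gcdl gcdnC addnn -mul2n Gauss_gcdr ?h1 ?mul1n //.
by rewrite coprimen2.
Qed.

Lemma two_neq0 {F : fieldType} (p : nat) : p \in [pchar F] -> odd p -> (2%:R : F) != 0.
Proof.
move=> hc hp; rewrite -(dvdn_pcharf hc); apply/negP => /dvdn_leq h.
move: hp (h isT) (prime_gt1 (pcharf_prime hc)); case: (p) => [|[|[|q]]] //.
Qed.

Lemma L1_inj {F : finFieldType} (p m k : nat) : p \in [pchar F] -> odd p ->
  #|F| = (p ^ m)%N -> (0 < k)%N -> odd (m %/ gcdn m k) ->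
  injective (fun x : F => x + x ^+ (p ^ k)).
Proof.
move=> hc hp hF k0 hodd x y /= hxy.
have pp := pcharf_prime hc.
set a := x - y.
have ha : a + a ^+ (p ^ k) = 0.
  rewrite /a frobB //.
  have -> : x - y + (x ^+ (p ^ k) - y ^+ (p ^ k)) = (x + x ^+ (p ^ k)) - (y + y ^+ (p ^ k)) by ring.
  by rewrite hxy subrr.
have haq : a ^+ (p ^ k) = - a by apply/eqP; rewrite -addr_eq0 addrC ha.
have f2 : fixp p a (k + k) by rewrite /fixp expnD exprM haq frobN // haq opprK.
have fm : fixp p a m by rewrite /fixp -hF expf_card.
have fl := fix_gcd f2 fm; rewrite gcd2k // in fl.
have fk : fixp p a k := fix_dvd (dvdn_gcdr m k) fl.
rewrite /fixp in fk; rewrite fk in ha.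
have : 2%:R * a = 0 by rewrite mulr_natl mulr2n.
move/eqP; rewrite mulf_eq0 (negbTE (@two_neq0 _ p hc hp)) /= subr_eq0.
by move/eqP.
Qed.

Lemma nonfix {F : finFieldType} (p m k : nat) : prime p -> #|F| = (p ^ m)%N ->
  (0 < k)%N -> (k < m)%N -> exists z : F, z ^+ (p ^ k) != z.
Proof.
move=> pp hF k0 km.
case: (pickP (fun z : F => z ^+ (p ^ k) != z)) => [z hz|H]; first by exists z.
exfalso.
have q1 : (1 < p ^ k)%N by rewrite -(expn0 p) ltn_exp2l ?prime_gt1.
set P : {poly F} := 'X^(p ^ k) - 'X.
have sP : size P = (p ^ k).+1.
  by rewrite /P size_polyDl ?size_polyXn // size_polyN size_polyX ltnS.
have P0 : P != 0 by rewrite -size_poly_eq0 sP.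
have hall : all (root P) (enum F).
  apply/allP => z _; rewrite rootE /P hornerD hornerN hornerXn hornerX subr_eq0.
  by move: (H z) => /negbFE.
have := max_poly_roots P0 hall (enum_uniq F).
by rewrite -cardE hF sP ltnS leq_exp2l ?prime_gt1 // leqNgt km.
Qed.

Lemma Lmap_inj {F : fieldType} {p k : nat} :
  injective (fun x : F => x + x ^+ (p ^ k)) -> injective (@Lmap F p k).
Proof.
by move=> hi [a b] [c d]; rewrite /Lmap /= => [[h1 h2]]; rewrite (hi a c h1) h2.
Qed.

Lemma LinvK {F : finFieldType} {p k : nat} (u : F * F) :
  injective (fun x : F => x + x ^+ (p ^ k)) -> Lmap p k (Linv p k u) = u.
Proof.
move=> hi; have [g _ gK] := injF_bij (Lmap_inj hi).
rewrite /Linv; case: pickP => [x /eqP //|H].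
by move: (H (g u)); rewrite gK eqxx.
Qed.

Lemma LmapK {F : finFieldType} {p k : nat} (u : F * F) :
  injective (fun x : F => x + x ^+ (p ^ k)) -> Linv p k (Lmap p k u) = u.
Proof. by move=> hi; apply: (Lmap_inj hi); rewrite LinvK. Qed.

Definition scal {F : fieldType} (e : F) (u : F * F) := (e * u.1, e * u.2).

Lemma circC {F : fieldType} p k (x y : F) : circ p k x y = circ p k y x.
Proof. by rewrite /circ addrC. Qed.

Lemma smulC {F : fieldType} p k (al : F) s u v : smul p k al s u v = smul p k al s v u.
Proof. by rewrite /smul circC (circC _ _ u.2); congr pair; ring. Qed.

Lemma sstarC {F : finFieldType} p k (al : F) s u v : sstar p k al s u v = sstar p k al s v u.
Proof. by rewrite /sstar smulC. Qed.

Lemma smul_scal {F : fieldType} p k (al : F) s e U V :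
  e ^+ (p ^ k) = e -> e ^+ (p ^ s) = e ->
  smul p k al s (scal e U) V = scal e (smul p k al s U V).
Proof.
move=> hk hs; rewrite /smul /scal /circ /= !exprMn hk.
have -> : e * U.2 ^+ (p ^ k) * V.2 + V.2 ^+ (p ^ k) * (e * U.2)
  = e * (U.2 ^+ (p ^ k) * V.2 + V.2 ^+ (p ^ k) * U.2) by ring.
by rewrite exprMn hs; congr pair; ring.
Qed.

Lemma Lmap_scal {F : fieldType} p k (e : F) u :
  e ^+ (p ^ k) = e -> Lmap p k (scal e u) = scal e (Lmap p k u).
Proof. by move=> hk; rewrite /Lmap /scal /= exprMn hk; congr pair; ring. Qed.

Lemma Linv_scal {F : finFieldType} p k (e : F) u :
  injective (fun x : F => x + x ^+ (p ^ k)) -> e ^+ (p ^ k) = e ->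
  Linv p k (scal e u) = scal e (Linv p k u).
Proof. by move=> hi hk; apply: (Lmap_inj hi); rewrite LinvK // Lmap_scal // LinvK. Qed.

Lemma Linv_0 {F : finFieldType} p k (w : F) : (0 < p)%N ->
  injective (fun x : F => x + x ^+ (p ^ k)) -> Linv p k (0, w) = (0, w).
Proof.
move=> p0 hi; have h : Lmap p k (0, w) = (0, w) by rewrite /Lmap /= pow0 // addr0.
by rewrite -{1}h LmapK.
Qed.

Lemma Linv1 {F : finFieldType} {p k} (u : F * F) :
  injective (fun x : F => x + x ^+ (p ^ k)) ->
  (Linv p k u).1 + (Linv p k u).1 ^+ (p ^ k) = u.1.
Proof. by move=> hi; have := congr1 fst (LinvK u hi). Qed.

Lemma Linv2 {F : finFieldType} {p k} (u : F * F) :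
  injective (fun x : F => x + x ^+ (p ^ k)) -> (Linv p k u).2 = u.2.
Proof. by move=> hi; have := congr1 snd (LinvK u hi). Qed.

Lemma star_f {F : finFieldType} p k (al : F) s (e : F) z : (0 < p)%N ->
  injective (fun x : F => x + x ^+ (p ^ k)) -> e ^+ (p ^ k) = e ->
  sstar p k al s (Lmap p k (e, 0)) z = scal e z.
Proof.
move=> p0 hi hk; rewrite /sstar LmapK //.
transitivity (scal e (Lmap p k (Linv p k z))); last by rewrite LinvK.
move: (Linv p k z) => [c d].
rewrite /smul /scal /Lmap /circ /= !pow0 // !mul0r !mulr0 !addr0 pow0 // mulr0 addr0 hk.
by congr pair; ring.
Qed.

Lemma nuc_sub {F : finFieldType} (p m k s : nat) (al : F) (a : F * F) :
  p \in [pchar F] -> odd p -> #|F| = (p ^ m)%N -> (0 < k)%N -> (k < m)%N ->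
  injective (fun x : F => x + x ^+ (p ^ k)) -> al != 0 ->
  a \in right_nucleus (sstar p k al s) ->
  exists e, [/\ e ^+ (p ^ k) = e, e ^+ (p ^ s) = e & a = Lmap p k (e, 0)].
Proof.
move=> hc hp hF k0 km hi al0; rewrite inE => /forallP H.
have pp := pcharf_prime hc; have p0 := prime_gt0 pp.
have Ha : forall x y, sstar p k al s (sstar p k al s x y) a = sstar p k al s x (sstar p k al s y a).
  by move=> x y; apply/eqP; exact: (forallP (H x) y).
have HR : forall X Y, smul p k al s (Linv p k (smul p k al s X Y)) (Linv p k a)
   = smul p k al s X (Linv p k (smul p k al s Y (Linv p k a))).
  by move=> X Y; have := Ha (Lmap p k X) (Lmap p k Y); rewrite /sstar !LmapK.
have z0 : forall n, (0 : F) ^+ (p ^ n) = 0 by move=> n; apply: pow0.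
have aK := LinvK a hi.
case E: (Linv p k a) => [e g] in HR aK.
have [z hz] := @nonfix F p m k pp hF k0 km.
have H2 := congr1 snd (HR (0, 1) (z, 0)).
have E1 : smul p k al s (0, 1) (z, 0) = (0, z).
  by rewrite /smul /circ /= ?(z0, mul0r, mulr0, add0r, addr0, mul1r, mulr1, expr1n).
rewrite E1 Linv_0 // in H2.
have hW := Linv1 (p:=p) (k:=k) (smul p k al s (z, 0) (e, g)) hi.
set W := Linv p k (smul p k al s (z, 0) (e, g)) in H2 hW.
rewrite /smul /= !mul0r !add0r !mul1r in H2.
rewrite /smul /circ /= ?(z0, mul0r, mulr0, add0r, addr0, mul1r, mulr1, expr1n) -H2 in hW.
have ek : e ^+ (p ^ k) = e.
  move: hW; rewrite exprMn => hW.
  have : (z - z ^+ (p ^ k)) * (e - e ^+ (p ^ k)) = 0.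
    have -> : (z - z ^+ (p ^ k)) * (e - e ^+ (p ^ k))
       = (z * e + z ^+ (p ^ k) * e ^+ (p ^ k)) - (z ^+ (p ^ k) * e + e ^+ (p ^ k) * z) by ring.
    by rewrite hW subrr.
  move/eqP; rewrite mulf_eq0 subr_eq0 eq_sym (negbTE hz) /= subr_eq0 => /eqP hh.
  by rewrite -hh.
clear H2 hW W.
have g0 : g = 0.
  have H1 := congr1 snd (HR (z, 0) (z, 0)).
  have hV := Linv1 (p:=p) (k:=k) (smul p k al s (z, 0) (z, 0)) hi.
  have hV2 := Linv2 (p:=p) (k:=k) (smul p k al s (z, 0) (z, 0)) hi.
  have hU2 := Linv2 (p:=p) (k:=k) (smul p k al s (z, 0) (e, g)) hi.
  set V := Linv p k (smul p k al s (z, 0) (z, 0)) in H1 hV hV2.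
  set U := Linv p k (smul p k al s (z, 0) (e, g)) in H1 hU2.
  rewrite /smul /circ /= ?(z0, mul0r, mulr0, add0r, addr0, mul1r, mulr1, expr1n) in hV hV2 hU2.
  rewrite /smul /= hV2 hU2 ?(z0, mul0r, mulr0, add0r, addr0, mul1r, mulr1, expr1n) in H1.
  case: (eqVneq g 0) => // gn0; exfalso.
  have hv : V.1 = z * z by apply: (mulIf gn0); rewrite H1 mulrA.
  rewrite hv exprMn in hV.
  have : (z - z ^+ (p ^ k)) * (z - z ^+ (p ^ k)) = 0.
    have -> : (z - z ^+ (p ^ k)) * (z - z ^+ (p ^ k))
      = (z * z + z ^+ (p ^ k) * z ^+ (p ^ k)) - (z ^+ (p ^ k) * z + z ^+ (p ^ k) * z) by ring.
    by rewrite hV subrr.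
  by move/eqP; rewrite mulf_eq0 orbb subr_eq0 eq_sym (negbTE hz).
subst g.
have H3 := congr1 fst (HR (0, 1) (0, 1)).
have E3 : smul p k al s (0, 1) (e, 0) = (0, e).
  by rewrite /smul /circ /= ?(z0, mul0r, mulr0, add0r, addr0, mul1r, mulr1, expr1n).
rewrite E3 Linv_0 // in H3.
have hT := Linv1 (p:=p) (k:=k) (smul p k al s (0, 1) (0, 1)) hi.
have hT2 := Linv2 (p:=p) (k:=k) (smul p k al s (0, 1) (0, 1)) hi.
set T := Linv p k (smul p k al s (0, 1) (0, 1)) in H3 hT hT2.
rewrite /smul /circ /= ?(z0, mul0r, mulr0, add0r, addr0, mul1r, mulr1, expr1n) in hT hT2.
rewrite /smul /circ /= hT2 ek ?(z0, mul0r, mulr0, add0r, addr0, mul1r, mulr1, expr1n) in H3.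
exists e; split => //.
have two : (1 + 1 : F) != 0 by move: (@two_neq0 F p hc hp); rewrite mulr2n.
have c0 : al * (1 + 1) ^+ (p ^ s) != 0 by rewrite mulf_neq0 // expf_neq0.
have h : e * (al * (1 + 1) ^+ (p ^ s)) = e ^+ (p ^ s) * (al * (1 + 1) ^+ (p ^ s)).
  have -> : e ^+ (p ^ s) * (al * (1 + 1) ^+ (p ^ s)) = al * (e + e) ^+ (p ^ s).
    have -> : e + e = (1 + 1) * e by ring.
    by rewrite exprMn; ring.
  by rewrite -H3 -hT; ring.
by have := mulIf c0 h.
Qed.

Lemma nuc_comm (T : finType) (op : T -> T -> T) : commutative op ->
  left_nucleus op = nucleus op /\ right_nucleus op = nucleus op.
Proof.
move=> hC.
have inL a : a \in left_nucleus op <-> (forall x y, op (op a x) y = op a (op x y)).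
  rewrite inE; split => [/forallP H x y|H].
    exact/eqP/(forallP (H x) y).
  by apply/forallP => x; apply/forallP => y; apply/eqP/H.
have inM a : a \in middle_nucleus op <-> (forall x y, op (op x a) y = op x (op a y)).
  rewrite inE; split => [/forallP H x y|H].
    exact/eqP/(forallP (H x) y).
  by apply/forallP => x; apply/forallP => y; apply/eqP/H.
have inR a : a \in right_nucleus op <-> (forall x y, op (op x y) a = op x (op y a)).
  rewrite inE; split => [/forallP H x y|H].
    exact/eqP/(forallP (H x) y).
  by apply/forallP => x; apply/forallP => y; apply/eqP/H.
have LR a : (a \in left_nucleus op) = (a \in right_nucleus op).
  apply/idP/idP.
    move/inL => H; apply/inR => x y.
    by rewrite (hC (op x y) a) (hC x y) -H (hC (op a y) x) (hC a y).
  move/inR => H; apply/inL => x y.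
  by rewrite (hC (op a x) y) (hC a x) -H (hC (op y x) a) (hC y x).
have LM a : a \in left_nucleus op -> a \in middle_nucleus op.
  move/inL => H; apply/inM => x y.
  by rewrite (hC x a) H (hC x y) -H (hC (op a y) x).
have e : left_nucleus op = nucleus op.
  apply/setP => a; rewrite /nucleus !in_setI -LR.
  by case: (boolP (a \in left_nucleus op)) => //= /LM ->.
split => //; apply/setP => a; by rewrite -LR e.
Qed.

Theorem theorem3 (F : finFieldType) (p m k s : nat) (alpha : F) :
  prime p -> odd p -> p \in [pchar F] -> #|F| = (p ^ m)%N ->
  (0 < k)%N -> (k <= m./2)%N -> odd (m %/ gcdn m k) ->
  alpha ^+ (p ^ gcdn m k) = alpha ->
  ~~ [exists y : F, y ^+ 2 == alpha] ->
  (s <= m./2)%N ->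
  left_nucleus (sstar p k alpha s) = nucleus (sstar p k alpha s) /\
  right_nucleus (sstar p k alpha s) = nucleus (sstar p k alpha s) /\
  exists f : F -> F * F,
    [/\ {in Fsub F p (gcdn (gcdn m k) s) &, injective f},
        f @: Fsub F p (gcdn (gcdn m k) s) = nucleus (sstar p k alpha s),
        {in Fsub F p (gcdn (gcdn m k) s) &, forall x y, f (x + y) = padd (f x) (f y)} &
        {in Fsub F p (gcdn (gcdn m k) s) &, forall x y,
           f (x * y) = sstar p k alpha s (f x) (f y)}].
Proof.
move=> pp hp hc hF k0 kh hodd hal hsq hs.
have p0 := prime_gt0 pp.
have z0 : forall n, (0 : F) ^+ (p ^ n) = 0 by move=> n; apply: pow0.
have km : (k < m)%N.
  have h2 : (m./2 + m./2 <= m)%N.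
    by rewrite addnn -{2}(odd_double_half m) leq_addl.
  apply: leq_trans (_ : (k < k + k)%N) _; first by rewrite -{1}(addn0 k) ltn_add2l.
  exact: leq_trans (leq_add kh kh) h2.
have hi := @L1_inj F p m k hc hp hF k0 hodd.
have al0 : alpha != 0.
  apply: contraNneq hsq => ->; apply/existsP; exists 0; by rewrite expr0n.
have [hL hR] := @nuc_comm _ _ (@sstarC F p k alpha s : commutative (sstar p k alpha s)).
split => //; split => //.
set t := gcdn (gcdn m k) s.
have tk : (t %| k)%N := dvdn_trans (dvdn_gcdl _ s) (dvdn_gcdr m k).
have ts : (t %| s)%N := dvdn_gcdr _ _.
have inFs : forall x, x \in Fsub F p t -> x ^+ (p ^ k) = x /\ x ^+ (p ^ s) = x.
  move=> x; rewrite inE => /eqP hx; split.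
    exact: (fix_dvd tk hx).
  exact: (fix_dvd ts hx).
exists (fun x => Lmap p k (x, 0)); split.
- by move=> x y _ _ /(Lmap_inj hi) [].
- apply/setP => a; apply/imsetP/idP.
    case=> x hx ->; have [hxk hxs] := inFs x hx.
    rewrite -hL inE; apply/forallP => u; apply/forallP => v; apply/eqP.
    rewrite !star_f //.
    by rewrite /sstar Linv_scal // smul_scal.
  move=> ha; have ha' : a \in right_nucleus (sstar p k alpha s) by rewrite hR.
  have [e [ek es ->]] := @nuc_sub F p m k s alpha a hc hp hF k0 km hi al0 ha'.
  exists e => //; rewrite inE; apply/eqP.
  have fm : fixp p e m by rewrite /fixp -hF expf_card.
  exact: fix_gcd (fix_gcd fm ek) es.
- move=> x y _ _; rewrite /Lmap /padd /= frobD // addr0; congr pair; ring.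
- move=> x y hx hy; have [hxk _] := inFs x hx; have [hyk _] := inFs y hy.
  rewrite /sstar !LmapK // /smul /circ /Lmap /= exprMn hxk hyk.
  rewrite ?(z0, mul0r, mulr0, add0r, addr0).
  congr pair; ring.
Qed.
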